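(* (1) For every integer $n\ge 2$, $\min\{e(i): 2^{n-1}\le i\le 2^{n}\}=\lfloor n/2\rfloor$. (2) For every integer $n\ge 1$, $\max\{e(i): 2^{n-1}\le i\le 2^{n}\}=n$. (3) For every integer $n\ge 0$, $\min\{i\ge 1: e(i)=n\}=2^{n}$. (4) For every integer $n\ge 0$, $\max\{i\ge 1: e(i)=n\}=\dfrac{4^{n+1}-1}{3}$.
   Context: The Stern polynomials $B_n(t)\in\mathbb{Z}[t]$, $n\ge 0$, are defined by $B_0(t)=0$, $B_1(t)=1$, $B_{2n}(t)=tB_n(t)$ and $B_{2n+1}(t)=B_n(t)+B_{n+1}(t)$ for $n\ge 1$. For $n\ge 1$, $e(n)=\deg_t B_n(t)$. *)

(* Defs.v *)
From HB Require Import structures.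
From mathcomp Require Import all_boot all_order all_algebra.
Set Implicit Arguments. Unset Strict Implicit. Unset Printing Implicit Defensive.
Import GRing.Theory.
Local Open Scope ring_scope.

(* Fuel-based definition; fuel k suffices for all n <= k. *)
Fixpoint stern_aux (k : nat) (n : nat) : {poly int} :=
  match k with
  | 0%N => 0
  | k'.+1 =>
    if n == 0%N then 0
    else if n == 1%N then 1
    else if ~~ odd n then 'X * stern_aux k' n./2
    else stern_aux k' n./2 + stern_aux k' (n./2).+1
  end.

Definition stern (n : nat) : {poly int} := stern_aux n n.

(* e(n) = deg_t B_n(t) (for n >= 1, B_n <> 0); size = degree + 1. *)
Definition e (n : nat) : nat := (size (stern n)).-1.

(* Main.v *)
Require Import Defs.
From mathcomp Require Import all_boot all_order all_algebra.
From mathcomp Require Import zify.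
Import GRing.Theory Num.Theory.
Open Scope ring_scope.

Lemma stern_aux_fuel k k' n : (n <= k)%N -> (n <= k')%N -> stern_aux k n = stern_aux k' n.
Proof.
elim: k k' n => [|k IH] [|k'] n /=.
- by [].
- by rewrite leqn0 => /eqP -> _.
- by move=> _; rewrite leqn0 => /eqP ->.
move=> hk hk'.
case: eqP => // /eqP n0; case: eqP => // /eqP n1.
have h2 : (2 <= n)%N by case: n n0 n1 {hk hk'} => [|[|n]].
have hh : (n./2.+1 <= n)%N.
  by move: (odd_double_half n); rewrite -addnn; case: (odd n) => /=; lia.
have hh' : (n./2 < n)%N by apply: leq_trans hh.
case: ifP => hodd.
  by rewrite (IH k') //; move: hh hh' hk hk'; generalize n./2; lia.
have hh2 : (n./2.+2 <= n)%N.
  by move: (odd_double_half n) h2; rewrite -addnn; move/negbFE: hodd => ->; lia.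
rewrite (IH k' n./2) ?(IH k' n./2.+1) //; move: hh2 hh hh' hk hk'; generalize n./2; lia.
Qed.

Lemma stern_aux_S k n : stern_aux k.+1 n =
    if n == 0%N then 0
    else if n == 1%N then 1
    else if ~~ odd n then 'X * stern_aux k n./2
    else stern_aux k n./2 + stern_aux k (n./2).+1.
Proof. by []. Qed.

Lemma stern_rec n : (2 <= n)%N -> stern n =
  if ~~ odd n then 'X * stern n./2 else stern n./2 + stern n./2.+1.
Proof.
case: n => [|[|k]] // _.
have hh : (k.+2./2.+1 <= k.+2)%N.
  by move: (odd_double_half k.+2); rewrite -addnn; case: (odd k.+2) => /=; lia.
rewrite /stern stern_aux_S -[k.+2 == 0%N]/false -[k.+2 == 1%N]/false.
case: ifP => hodd.
  by rewrite (stern_aux_fuel k.+1 (k.+2./2) k.+2./2) //; move: hh; generalize k.+2./2; lia.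
have hh2 : (k.+2./2.+2 <= k.+2)%N.
  by move: (odd_double_half k.+2); rewrite -addnn; move/negbFE: hodd => ->; lia.
rewrite (stern_aux_fuel k.+1 (k.+2./2) k.+2./2) // ?(stern_aux_fuel k.+1 (k.+2./2.+1) k.+2./2.+1) //;
 move: hh2 hh; generalize k.+2./2; lia.
Qed.

Lemma stern1 : stern 1 = 1. Proof. by []. Qed.
Lemma stern0 : stern 0 = 0. Proof. by []. Qed.

Lemma stern_even m : (1 <= m)%N -> stern (2 * m) = 'X * stern m.
Proof.
move=> hm; rewrite stern_rec; last by lia.
by rewrite oddM /= mul2n doubleK.
Qed.

Lemma stern_odd m : (1 <= m)%N -> stern (2 * m).+1 = stern m + stern m.+1.
Proof.
move=> hm; rewrite stern_rec; last by lia.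
by rewrite /= oddM /= mul2n uphalf_double.
Qed.

Definition nn (p : {poly int}) := forall i, 0 <= p`_i.

Lemma size_addnn_l p q : nn p -> nn q -> (size q <= size p)%N -> size (p + q) = size p.
Proof.
move=> hp hq hle; apply/eqP; rewrite eqn_leq.
have -> : (size (p + q)%R <= size p)%N by apply: (leq_trans (size_polyD p q)); rewrite geq_max leqnn hle.
case sp: (size p) => [//|k].
rewrite ltnNge; apply/negP => /leq_sizeP /(_ k (leqnn _)).
rewrite coefD => /eqP; rewrite paddr_eq0 ?hp ?hq // => /andP [/eqP hk _].
have : lead_coef p == 0 by rewrite lead_coefE sp /= hk.
rewrite lead_coef_eq0 => /eqP p0; move: sp; rewrite p0 size_poly0 //.
Qed.

Lemma size_addnn p q : nn p -> nn q -> size (p + q) = maxn (size p) (size q).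
Proof.
move=> hp hq; case: (leqP (size q) (size p)) => h.
  by rewrite size_addnn_l // (maxn_idPl h).
by rewrite addrC size_addnn_l // ?(maxn_idPr (ltnW h)) // ltnW.
Qed.

Lemma nnX p : nn p -> nn ('X * p).
Proof. by move=> hp i; rewrite coefXM; case: (i == 0)%N. Qed.

Lemma nnD p q : nn p -> nn q -> nn (p + q).
Proof. by move=> hp hq i; rewrite coefD addr_ge0. Qed.

Lemma stern_nn_sz n : nn (stern n) /\ (1 <= n -> 1 <= size (stern n))%N.
Proof.
elim/ltn_ind: n => n IH.
case: n IH => [|[|k]] IH.
- by split => // i; rewrite stern0 coef0.
- by rewrite stern1; split => [i|]; rewrite ?size_poly1 // coefC; case: (i == 0)%N.
have hk : (2 <= k.+2)%N by [].
move: (odd_double_half k.+2); rewrite -addnn; set m := k.+2./2 => hm.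
case hodd: (odd k.+2) hm => /= hm.
- have -> : k.+2 = (2 * m).+1 by lia.
  rewrite stern_odd; last by lia.
  have [h1 h2] := IH m ltac:(lia); have {h2} h2 := h2 ltac:(lia).
  have [h3 h4] := IH m.+1 ltac:(lia); have {h4} h4 := h4 ltac:(lia).
  split; first exact: nnD.
  by rewrite size_addnn //; lia.
- have -> : k.+2 = (2 * m)%N by lia.
  rewrite stern_even; last by lia.
  have [h1 h2] := IH m ltac:(lia); have {h2} h2 := h2 ltac:(lia).
  split; first exact: nnX.
  by rewrite -commr_polyX size_mulX // -size_poly_eq0 -lt0n.
Qed.

Lemma e_even m : (1 <= m)%N -> e (2 * m) = (e m).+1.
Proof.
move=> hm; rewrite /e stern_even // -commr_polyX size_mulX.
  by have [_ h] := stern_nn_sz m; move: (h hm); case: (size _).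
by rewrite -size_poly_eq0; have [_ h] := stern_nn_sz m; move: (h hm); case: (size _).
Qed.

Lemma e_odd m : (1 <= m)%N -> e (2 * m).+1 = maxn (e m) (e m.+1).
Proof.
move=> hm; rewrite /e stern_odd // size_addnn; try by case: (stern_nn_sz m); case: (stern_nn_sz m.+1).
have [_ h] := stern_nn_sz m; have [_ h'] := stern_nn_sz m.+1.
move: (h hm) (h' isT); case: (size (stern m)) => // a; case: (size (stern m.+1)) => // b _ _.
by rewrite maxnSS.
Qed.

Lemma e1 : e 1 = 0%N.
Proof. by rewrite /e stern1 size_poly1. Qed.
Close Scope ring_scope.

Lemma split2 i : (2 <= i)%N -> exists m, (1 <= m < i)%N /\ (i = 2 * m \/ i = (2 * m).+1)%N.
Proof.
move=> hi; exists i./2; move: (odd_double_half i); rewrite -addnn.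
generalize i./2 => m; case: (odd i) => /= h; split; lia.
Qed.

Lemma pw2 k : (2 ^ k.+1 = 2 * 2 ^ k)%N. Proof. exact: expnS. Qed.

Lemma lemA i : forall k, (1 <= i <= 2 ^ k)%N -> (e i <= k)%N.
Proof.
elim/ltn_ind: i => i IH k hi.
case: (leqP i 1) => h1.
  have -> : i = 1%N by lia.
  by rewrite e1.
have [m [hm [hi2 | hi2]]] := split2 _ h1; subst i.
- case: k hi => [|k]; first by rewrite expn0; lia.
  rewrite pw2 => hi; rewrite e_even; last by lia.
  suff : (e m <= k)%N by [].
  apply: IH; lia.
- case: k hi => [|k]; first by rewrite expn0; lia.
  rewrite pw2 => hi; rewrite e_odd; last by lia.
  have ha : (e m <= k)%N by apply: IH; lia.
  have hb : (e m.+1 <= k)%N by apply: IH; lia.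
  lia.
Qed.

Lemma lemB i : forall k, (1 <= i < 2 ^ k)%N -> (e i < k)%N.
Proof.
elim/ltn_ind: i => i IH k hi.
case: (leqP i 1) => h1.
  have -> : i = 1%N by lia.
  rewrite e1; case: k hi => //; rewrite expn0; lia.
have [m [hm [hi2 | hi2]]] := split2 _ h1; subst i.
- case: k hi => [|k]; first by rewrite expn0; lia.
  rewrite pw2 => hi; rewrite e_even; last by lia.
  suff : (e m < k)%N by [].
  apply: IH; lia.
- case: k hi => [|k]; first by rewrite expn0; lia.
  rewrite pw2 => hi; rewrite e_odd; last by lia.
  have ha := lemA m k ltac:(lia).
  have hb := lemA m.+1 k ltac:(lia).
  lia.
Qed.

Fixpoint a (n : nat) : nat := if n is n'.+1 then 4 * a n' + 1 else 1.

Lemma a_pos n : (1 <= a n)%N.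
Proof. by elim: n => //= n IH; lia. Qed.

Lemma lemD i : forall n, (a n < i)%N -> (n < e i)%N.
Proof.
elim/ltn_ind: i => i IH n hi.
have h1 : (2 <= i)%N by move: (a_pos n); lia.
have [m [hm [hi2 | hi2]]] := split2 _ h1.
- rewrite hi2 e_even; last by lia.
  case: n hi => [|n] /= hi //.
  rewrite ltnS; apply: IH; lia.
- rewrite hi2 e_odd; last by lia.
  case: n hi => [|n] /= hi.
    rewrite leq_max; apply/orP; right; apply: IH => /=; lia.
  have h2 : (2 <= m)%N by move: (a_pos n); lia.
  have [p [hp [hm2 | hm2]]] := split2 _ h2.
  + rewrite leq_max; apply/orP; left.
    rewrite hm2 e_even; last by lia.
    rewrite ltnS; apply: IH; lia.
  + rewrite leq_max; apply/orP; right.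
    have -> : m.+1 = (2 * p.+1)%N by lia.
    rewrite e_even; last by lia.
    rewrite ltnS; apply: IH; lia.
Qed.

Lemma lemE n : e (a n) = n /\ e (a n).+1 = n.+1.
Proof.
elim: n => [|n [IH1 IH2]].
  by rewrite /= e1; split => //; rewrite -[2%N]/(2 * 1)%N e_even // e1.
have hp := a_pos n.
have h3 : e (2 * a n).+1 = n.+1 by rewrite e_odd // IH1 IH2; lia.
rewrite /=; split.
  have -> : (4 * a n + 1 = (2 * (2 * a n)).+1)%N by lia.
  by rewrite e_odd; [rewrite e_even // IH1 h3 maxnn | lia].
have -> : ((4 * a n + 1).+1 = 2 * (2 * a n).+1)%N by lia.
by rewrite e_even // h3.
Qed.

Lemma a_bounds n : (2 ^ (2 * n) <= a n < 2 * 2 ^ (2 * n))%N.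
Proof.
elim: n => [|n IH] //=.
have -> : (2 * n.+1 = (2 * n).+2)%N by lia.
rewrite !pw2; lia.
Qed.

Lemma a_closed n : (3 * a n + 1 = 4 ^ n.+1)%N.
Proof. by elim: n => //= n IH; rewrite expnS -IH; lia. Qed.

Lemma e_pow n : e (2 ^ n) = n.
Proof.
elim: n => [|n IH]; first by rewrite expn0 e1.
by rewrite pw2 e_even ?IH // expn_gt0.
Qed.

Theorem theorem4p3 :
  (forall n : nat, (2 <= n)%N ->
     (exists2 i, (2 ^ n.-1 <= i <= 2 ^ n)%N & e i = n./2) /\
     (forall i, (2 ^ n.-1 <= i <= 2 ^ n)%N -> (n./2 <= e i)%N)) /\
  (forall n : nat, (1 <= n)%N ->
     (exists2 i, (2 ^ n.-1 <= i <= 2 ^ n)%N & e i = n) /\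
     (forall i, (2 ^ n.-1 <= i <= 2 ^ n)%N -> (e i <= n)%N)) /\
  (forall n : nat,
     e (2 ^ n) = n /\ (forall i, (1 <= i)%N -> e i = n -> (2 ^ n <= i)%N)) /\
  (forall n : nat,
     e ((4 ^ n.+1 - 1) %/ 3) = n /\
     (forall i, (1 <= i)%N -> e i = n -> (i <= (4 ^ n.+1 - 1) %/ 3)%N)).
Proof.
have aE n : ((4 ^ n.+1 - 1) %/ 3 = a n)%N.
  by rewrite -a_closed addnK mulKn.
split; [|split; [|split]].
- move=> n hn; move: (odd_double_half n); rewrite -addnn.
  set k := n./2 => hk; split.
  + case ho: (odd n) hk => /= hk.
    * exists (a k); last by case: (lemE k).
      have := a_bounds k; have -> : n.-1 = (2 * k)%N by lia.
      have -> : n = (2 * k).+1 by lia.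
      rewrite pw2; lia.
    * case: k hk => [|k] hk; first by lia.
      exists (2 * a k).+1; last by rewrite e_odd ?a_pos //; case: (lemE k) => -> ->; lia.
      have := a_bounds k; have -> : n.-1 = (2 * k).+1 by lia.
      have -> : n = (2 * k).+2 by lia.
      rewrite !pw2; lia.
  + move=> i /andP [hi _].
    case hk0 : k => [|j] //.
    apply: lemD.
    have := a_bounds j; have h : (2 * j).+1 <= n.-1 by lia.
    have := leq_pexp2l (isT : 0 < 2) h.
    rewrite pw2; lia.
- move=> n hn; split.
    by exists (2 ^ n); [rewrite leqnn andbT leq_pexp2l // leq_pred | rewrite e_pow].
  move=> i /andP [hi hi2]; apply: lemA; rewrite hi2 andbT.
  by apply: leq_trans hi; rewrite expn_gt0.
- move=> n; split; first exact: e_pow.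
  move=> i hi hei; rewrite leqNgt; apply/negP => h.
  by move: (lemB i n); rewrite hi h hei ltnn => /(_ isT).
- move=> n; rewrite aE; split; first by case: (lemE n).
  move=> i hi hei; rewrite leqNgt; apply/negP => h.
  by move: (lemD i n h); rewrite hei ltnn.
Qed.
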